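(* Let $C=c_0c_1\dots c_{m-1}c_0$ and $D=(0)(1)\dots(n-1)(0)$ be reflexive digraph cycles with $D$ non-contractible, and let $i \in \{1,\dots,n\}$ (a vertex of $D$, with $n \equiv 0$). The graph $\mathrm{Mon}_1(C,D;i)$ is connected. Moreover, if it is nonempty, there are elements $\Phi_i^m$ and $\Phi_i^M$ of $\mathrm{Mon}_1(C,D;i)$ such that for every element $\phi$ of $\mathrm{Mon}_1(C,D;i)$ there is a sequence of monotone one-step up edges, through elements of $\mathrm{Mon}_1(C,D;i)$, from $\Phi_i^m$ to $\phi$, and one from $\phi$ to $\Phi_i^M$.
   Context: A digraph is a binary relation $\to$ on a finite vertex set; reflexive means every vertex has a loop. A digraph cycle $C=c_0c_1\dots c_{m-1}c_0$ (indices mod $m$, $m\ge 3$) has underlying graph the cycle with edges $c_ic_{i+1}$; $D=(0)(1)\dots(n-1)(0)$ has vertex set the integers mod $n$. $D$ is non-contractible if it has length at least $4$ or is a directed $3$-cycle. A homomorphism $\phi:C\to D$ satisfies $u\to v\Rightarrow\phi(u)\to\phi(v)$. $\mathrm{Hom}(C,D)$ is the digraph on homomorphisms with $\phi\to\phi'$ iff $\phi(u)\to\phi'(v)$ for all arcs $u\to v$ of $C$; connectivity refers to its underlying graph. Under $\phi$, edge $c_ic_{i+1}$ is increasing, stationary or decreasing as $\phi(c_{i+1})-\phi(c_i)$ is $1,0,-1$ (mod $n$); the wind of $\phi$ is (number of increasing minus number of decreasing edges)$/n$. $\mathrm{Mon}_1(C,D;i)$ is the subgraph of $\mathrm{Hom}(C,D)$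 induced by the homomorphisms $\phi$ of wind $1$ in which every edge is increasing or stationary and with $\phi(c_0)=i$. A monotone one-step up edge is a pair $(\phi,\phi')$ of such monotone wind-$1$ homomorphisms where, for some subpath of $C$ with vertex set $S$ all of whose edges are stationary under $\phi$ (so $\phi(S)=\{d\}$), $\phi'$ agrees with $\phi$ off $S$ and maps $S$ to $d+1$ (such $\phi,\phi'$ are adjacent in $\mathrm{Hom}(C,D)$). *)

(* Defs.v *)
From HB Require Import structures.
From mathcomp Require Import all_boot all_order all_algebra.
Set Implicit Arguments. Unset Strict Implicit. Unset Printing Implicit Defensive.
Import Order.TTheory GRing.Theory Num.Theory.

(* A digraph on vertex set 'I_m (= integers mod m, successor ordS) is a
   relation E : rel 'I_m ; u -> v is E u v. *)

Definition refl_cycle (m : nat) (E : rel 'I_m) : Prop :=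
  [/\ 3 <= m,
      (forall u, E u u),
      (forall u v, u != v -> E u v -> (v == ordS u) || (u == ordS v)) &
      (forall u, E u (ordS u) || E (ordS u) u)].

Definition directed3 (n : nat) (E : rel 'I_n) : Prop :=
  n = 3 /\
  ((forall j, E j (ordS j) && ~~ E (ordS j) j) \/
   (forall j, E (ordS j) j && ~~ E j (ordS j))).

Definition noncontractible (n : nat) (E : rel 'I_n) : Prop :=
  4 <= n \/ directed3 E.

Definition is_hom (m n : nat) (EC : rel 'I_m) (ED : rel 'I_n)
  (phi : {ffun 'I_m -> 'I_n}) : bool :=
  [forall u, forall v, EC u v ==> ED (phi u) (phi v)].

Definition hom_arc (m n : nat) (EC : rel 'I_m) (ED : rel 'I_n)
  (phi psi : {ffun 'I_m -> 'I_n}) : bool :=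
  [forall u, forall v, EC u v ==> ED (phi u) (psi v)].

Definition increasing (m n : nat) (phi : {ffun 'I_m -> 'I_n}) (u : 'I_m) :=
  phi (ordS u) == ordS (phi u).
Definition stationary (m n : nat) (phi : {ffun 'I_m -> 'I_n}) (u : 'I_m) :=
  phi (ordS u) == phi u.
Definition decreasing (m n : nat) (phi : {ffun 'I_m -> 'I_n}) (u : 'I_m) :=
  phi u == ordS (phi (ordS u)).

Definition wind (m n : nat) (phi : {ffun 'I_m -> 'I_n}) : rat :=
  ((#|[pred u | increasing phi u]|%:Z - #|[pred u | decreasing phi u]|%:Z)%R%:~R
    / n%:R)%R.

Definition mon1_hom (m n : nat) (EC : rel 'I_m) (ED : rel 'I_n)
  (phi : {ffun 'I_m -> 'I_n}) : bool :=
  [&& is_hom EC ED phi,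
      [forall u, increasing phi u || stationary phi u] &
      wind phi == 1%R].

Definition starts_at (m n : nat) (phi : {ffun 'I_m -> 'I_n}) (i : 'I_n) : bool :=
  [forall x : 'I_m, (val x == 0) ==> (phi x == i)].

Definition Mon1 (m n : nat) (EC : rel 'I_m) (ED : rel 'I_n) (i : 'I_n)
  : {set {ffun 'I_m -> 'I_n}} :=
  [set phi | mon1_hom EC ED phi && starts_at phi i].

Definition induced_und (m n : nat) (EC : rel 'I_m) (ED : rel 'I_n)
  (M : {set {ffun 'I_m -> 'I_n}}) : rel {ffun 'I_m -> 'I_n} :=
  fun phi psi => [&& phi \in M, psi \in M & hom_arc EC ED phi psi || hom_arc EC ED psi phi].

Definition in_subpath (m : nat) (a : 'I_m) (k : nat) (x : 'I_m) : bool :=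
  [exists j : 'I_m.+1, (j < k) && (x == iter j (@ordS m) a)].

Definition one_step_up (m n : nat) (EC : rel 'I_m) (ED : rel 'I_n)
  (phi phi' : {ffun 'I_m -> 'I_n}) : bool :=
  [&& mon1_hom EC ED phi, mon1_hom EC ED phi' &
   [exists a : 'I_m, exists k : 'I_m.+1,
      [&& 0 < k,
          [forall j : 'I_m.+1, (j.+1 < k) ==> stationary phi (iter j (@ordS m) a)] &
          [forall x, phi' x == (if in_subpath a k x then ordS (phi x) else phi x)]]]].

Definition up_in (m n : nat) (EC : rel 'I_m) (ED : rel 'I_n)
  (M : {set {ffun 'I_m -> 'I_n}}) : rel {ffun 'I_m -> 'I_n} :=
  fun phi psi => [&& phi \in M, psi \in M & one_step_up EC ED phi psi].

(* Main.v *)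
Require Import Defs.
From mathcomp Require Import all_boot all_order all_algebra zify.
Set Implicit Arguments. Unset Strict Implicit. Unset Printing Implicit Defensive.

Section S.
Variables (m n : nat) (EC : rel 'I_m) (ED : rel 'I_n) (i : 'I_n).
Hypothesis m3 : 3 <= m.
Hypothesis n3 : 3 <= n.
Hypothesis ECadj : forall u v, u != v -> EC u v -> (v == ordS u) || (u == ordS v).
Hypothesis EDloop : forall u, ED u u.
Hypothesis EDedge : forall u, ED u (ordS u) || ED (ordS u) u.

Lemma n_gt0 : 0 < n. Proof. lia. Qed.
Definition lvl (k : nat) : 'I_n := Ordinal (ltn_pmod (i + k) n_gt0).

Lemma lvlS k : ordS (lvl k) = lvl k.+1.
Proof. apply: val_inj => /=. by rewrite -addn1 modnDml addn1 addnS. Qed.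

Lemma lvl_modd a b : (lvl (a + b) == lvl a) = (b %% n == 0).
Proof.
have e : (lvl (a + b) == lvl a) = ((i + a) + b == (i + a) + 0 %[mod n]).
  by rewrite -val_eqE /= addn0 addnA.
by rewrite e eqn_modDl mod0n.
Qed.

Lemma lvl_neq1 a : (lvl a.+1 == lvl a) = false.
Proof. by rewrite -addn1 lvl_modd modn_small //; lia. Qed.
Lemma lvl_neq2 a : (lvl a.+2 == lvl a) = false.
Proof. by rewrite -addn2 lvl_modd modn_small //; lia. Qed.
Lemma lvl_n a : lvl (a + n) = lvl a.
Proof. by apply/eqP; rewrite lvl_modd modnn. Qed.
Lemma lvl0 : lvl 0 = i.
Proof. apply: val_inj => /=. by rewrite addn0 modn_small. Qed.

Definition repr (phi : {ffun 'I_m -> 'I_n}) (H : nat -> nat) :=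
  forall x : 'I_m, phi x = lvl (H x).
Definition validH (H : nat -> nat) :=
  [/\ H 0 = 0, H m = n & forall x, x < m -> H x <= H x.+1 <= (H x).+1].

Lemma validH_mono H : validH H -> forall x y, x <= y <= m -> H x <= H y.
Proof.
case=> _ _ hs x y /andP[]; elim: y => [|y IH]; first by rewrite leqn0 => /eqP ->.
rewrite leq_eqVlt => /orP[/eqP -> //|]; rewrite ltnS => hxy hy.
have := hs y hy; have := IH hxy (ltnW hy); lia.
Qed.

Lemma validH_le_n H : validH H -> forall x, x <= m -> H x <= n.
Proof. move=> hv x hx; have := validH_mono hv (x:=x) (y:=m); case: hv => _ -> _; apply; lia. Qed.

Lemma phiS phi H : repr phi H -> validH H -> forall v : 'I_m, phi (ordS v) = lvl (H v.+1).
Proof.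
move=> hr [h0 hm _] v; rewrite hr /=.
case: (ltnP v.+1 m) => hv; first by rewrite modn_small.
have e : v.+1 = m by have := ltn_ord v; lia.
by rewrite e modnn hm h0 -lvl_n.
Qed.

Lemma stepH H : validH H -> forall v : 'I_m, H v.+1 = H v \/ H v.+1 = (H v).+1.
Proof. case=> _ _ hs v; have := hs v (ltn_ord v); lia. Qed.

Lemma incH phi H : repr phi H -> validH H -> forall v,
  increasing phi v = (H v.+1 == (H v).+1).
Proof.
move=> hr hv v; rewrite /increasing (phiS hr hv) hr lvlS.
case: (stepH hv v) => ->; last by rewrite !eqxx.
by rewrite eq_sym lvl_neq1; apply/esym/eqP; lia.
Qed.

Lemma statH phi H : repr phi H -> validH H -> forall v,
  stationary phi v = (H v.+1 == H v).
Proof.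
move=> hr hv v; rewrite /stationary (phiS hr hv) hr.
case: (stepH hv v) => ->; first by rewrite !eqxx.
by rewrite lvl_neq1; apply/esym/eqP; lia.
Qed.

Lemma decH phi H : repr phi H -> validH H -> forall v, decreasing phi v = false.
Proof.
move=> hr hv v; rewrite /decreasing (phiS hr hv) hr lvlS.
by case: (stepH hv v) => ->; rewrite eq_sym ?lvl_neq1 ?lvl_neq2.
Qed.

Definition hcount (phi : {ffun 'I_m -> 'I_n}) (x : nat) : nat :=
  \sum_(v : 'I_m | v < x) (increasing phi v : nat).

Lemma hcount0 phi : hcount phi 0 = 0.
Proof. by rewrite /hcount big_pred0. Qed.

Lemma hcountS phi x (hx : x < m) :
  hcount phi x.+1 = hcount phi x + increasing phi (Ordinal hx).
Proof.
rewrite /hcount (bigD1 (Ordinal hx)) //= addnC; congr (_ + _).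
by apply: eq_bigl => v; rewrite ltnS -val_eqE /= andbC -ltn_neqAle.
Qed.

Lemma hcount_m phi : hcount phi m = #|[pred u | increasing phi u]|.
Proof.
rewrite /hcount -sum1_card.
rewrite big_mkcond /= [RHS]big_mkcond /=.
by apply: eq_bigr => v _; rewrite ltn_ord inE; case: (increasing phi v).
Qed.

Lemma repr_hcount phi H : repr phi H -> validH H -> forall x, x <= m -> hcount phi x = H x.
Proof.
move=> hr hv; elim=> [|x IH] hx; first by rewrite hcount0; case: hv.
rewrite (hcountS phi hx) IH ?(ltnW hx) // (incH hr hv) /=.
have := stepH hv (Ordinal hx) => /= hs.
by case: eqP => /= e; lia.
Qed.

Lemma wind1 (phi : {ffun 'I_m -> 'I_n}) : #|[pred u | decreasing phi u]| = 0 ->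
  (wind phi == 1%R) = (#|[pred u | increasing phi u]| == n).
Proof.
move=> h; rewrite /wind h GRing.subr0 pmulrn.
apply/eqP/eqP => [e|->].
  apply/eqP; rewrite -(Num.Theory.eqr_nat rat); apply/eqP; exact: GRing.divr1_eq e.
by rewrite GRing.divff // Num.Theory.pnatr_eq0; apply/eqP; lia.
Qed.

Lemma ordS_val n' (x : 'I_n') : val (ordS x) = if x.+1 == n' then 0 else x.+1.
Proof.
rewrite /=; case: eqP => [->|h]; first by rewrite modnn.
by rewrite modn_small //; have := ltn_ord x; lia.
Qed.

Lemma ordS_neq1 (x : 'I_n) : (ordS x == x) = false.
Proof. apply/eqP => /(congr1 val); rewrite ordS_val; have := ltn_ord x; case: eqP => e /=; lia. Qed.
Lemma ordS_neq2 (x : 'I_n) : (ordS (ordS x) == x) = false.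
Proof.
apply/eqP => /(congr1 val); rewrite ordS_val (ordS_val x); have := ltn_ord x.
by case: (x.+1 =P n) => e1; case: eqP => e2 /=; lia.
Qed.

Lemma repr_Mon1 phi H : repr phi H -> validH H -> is_hom EC ED phi ->
  phi \in Mon1 EC ED i.
Proof.
move=> hr hv hh; rewrite inE; apply/andP; split; [apply/and3P; split => //|].
- apply/forallP => u; rewrite (incH hr hv) (statH hr hv).
  by case: (stepH hv u) => ->; rewrite eqxx ?orbT.
- have hd : #|[pred u | decreasing phi u]| = 0.
    by apply: eq_card0 => u; rewrite [LHS]inE /= (decH hr hv).
  rewrite wind1 //.
  by rewrite -hcount_m (repr_hcount hr hv) //; case: hv => _ -> _.
- apply/forallP => x; apply/implyP => /eqP x0.
  by rewrite hr x0; case: hv => -> _ _; rewrite lvl0.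
Qed.

Lemma Mon1_repr phi : phi \in Mon1 EC ED i -> repr phi (hcount phi) /\ validH (hcount phi).
Proof.
rewrite inE => /andP[/and3P[hh /forallP hmono hw] /forallP hst].
have hd : #|[pred u | decreasing phi u]| = 0.
  apply: eq_card0 => u; rewrite [LHS]inE /= /decreasing.
  case/orP: (hmono u) => /eqP ->; first by rewrite eq_sym ordS_neq2.
  by rewrite eq_sym ordS_neq1.
rewrite wind1 // in hw.
have hr : repr phi (hcount phi).
  suff: forall k (hk : k < m) (x : 'I_m), val x = k -> phi x = lvl (hcount phi k).
    by move=> h x; apply: h.
  elim=> [|k IH] hk x hx.
    by move: (hst x); rewrite hx eqxx /= hcount0 lvl0 => /eqP.
  have hk' : k < m by lia.
  have -> : x = ordS (Ordinal hk') by apply: val_inj; rewrite /= hx modn_small.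
  rewrite (hcountS phi hk').
  case/orP: (hmono (Ordinal hk')) => /[dup] h /eqP ->.
    by rewrite h (IH hk' (Ordinal hk') erefl) lvlS addn1.
  have -> : increasing phi (Ordinal hk') = false.
    by apply/negbTE; move: h; rewrite /increasing /stationary => /eqP ->; rewrite eq_sym ordS_neq1.
  by rewrite addn0 (IH hk' (Ordinal hk') erefl).
split=> //; split; first exact: hcount0.
  by rewrite hcount_m; apply/eqP.
by move=> x hx; rewrite (hcountS phi hx); case: (increasing _ _); lia.
Qed.

Lemma repr_eq phi psi H H' : repr phi H -> repr psi H' ->
  (forall x : 'I_m, H x = H' x) -> phi = psi.
Proof. by move=> hr hr' e; apply/ffunP => x; rewrite hr hr' e. Qed.

Lemma Mon1_hom phi : phi \in Mon1 EC ED i -> is_hom EC ED phi.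
Proof. by rewrite inE => /andP[/and3P[]]. Qed.

Lemma hom_edges (phi : {ffun 'I_m -> 'I_n}) :
  (forall v : 'I_m, phi v = phi (ordS v) \/
     exists psi, [/\ is_hom EC ED psi, psi v = phi v & psi (ordS v) = phi (ordS v)]) ->
  is_hom EC ED phi.
Proof.
move=> h; apply/forallP => x; apply/forallP => y; apply/implyP => exy.
case: (eqVneq x y) => [<-|nxy]; first exact: EDloop.
have homE psi : is_hom EC ED psi -> forall a b, EC a b -> ED (psi a) (psi b).
  by move=> /forallP hp a b; move/forallP: (hp a) => /(_ b) /implyP.
case/orP: (ECadj nxy exy) => /eqP e; subst.
  case: (h x) => [->|[psi [hp e1 e2]]]; first exact: EDloop.
  by rewrite -e1 -e2; apply: homE.
case: (h y) => [e'|[psi [hp e1 e2]]]; first by rewrite e'; apply: EDloop.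
by rewrite -e1 -e2; apply: homE.
Qed.

Lemma Mon1_of_H H : validH H ->
  (forall v : 'I_m, H v.+1 = H v \/ exists psi, [/\ psi \in Mon1 EC ED i,
       hcount psi v = H v & hcount psi v.+1 = H v.+1]) ->
  [ffun x : 'I_m => lvl (H x)] \in Mon1 EC ED i /\
  forall x, x <= m -> hcount [ffun x : 'I_m => lvl (H x)] x = H x.
Proof.
move=> hv h; set phi := [ffun x : 'I_m => lvl (H x)].
have hr : repr phi H by move=> x; rewrite ffunE.
split; last exact: repr_hcount hr hv.
apply: (repr_Mon1 hr hv); apply: hom_edges => v.
case: (h v) => [e|[psi [hpsi e1 e2]]]; first by left; rewrite (phiS hr hv) hr e.
right; exists psi; case: (Mon1_repr hpsi) => hr' hv'; split.
- exact: Mon1_hom.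
- by rewrite hr hr' e1.
- by rewrite (phiS hr hv) (phiS hr' hv') e2.
Qed.

Lemma Mon1_op (op : nat -> nat -> nat) f g :
  (forall a, op a a = a) ->
  (forall a b c d, a <= b <= a.+1 -> c <= d <= c.+1 ->
     op a c <= op b d <= (op a c).+1 /\
     (op b d = op a c \/ (a = op a c /\ b = op b d) \/ (c = op a c /\ d = op b d))) ->
  f \in Mon1 EC ED i -> g \in Mon1 EC ED i ->
  exists2 psi, psi \in Mon1 EC ED i &
    forall x, x <= m -> hcount psi x = op (hcount f x) (hcount g x).
Proof.
move=> hid har hf hg.
case: (Mon1_repr hf) => hrf [f0 fm fs]; case: (Mon1_repr hg) => hrg [g0 gm gs].
set H := fun x => op (hcount f x) (hcount g x).
have hv : validH H.
  split; first by rewrite /H f0 g0 hid.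
    by rewrite /H fm gm hid.
  by move=> x hx; case: (har _ _ _ _ (fs x hx) (gs x hx)).
have [|h1 h2] := Mon1_of_H hv.
  move=> v; case: (har _ _ _ _ (fs v (ltn_ord v)) (gs v (ltn_ord v))) => _.
  case=> [e|[[e1 e2]|[e1 e2]]]; first by left.
    by right; exists f.
  by right; exists g.
by exists [ffun x : 'I_m => lvl (H x)].
Qed.

Lemma Mon1_max f g : f \in Mon1 EC ED i -> g \in Mon1 EC ED i ->
  exists2 psi, psi \in Mon1 EC ED i &
    forall x, x <= m -> hcount psi x = maxn (hcount f x) (hcount g x).
Proof. apply: Mon1_op; [exact: maxnn | move=> a b c d h1 h2; lia]. Qed.

Lemma Mon1_min f g : f \in Mon1 EC ED i -> g \in Mon1 EC ED i ->
  exists2 psi, psi \in Mon1 EC ED i &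
    forall x, x <= m -> hcount psi x = minn (hcount f x) (hcount g x).
Proof. apply: Mon1_op; [exact: minnn | move=> a b c d h1 h2; lia]. Qed.

Lemma iter_ordS_val (a : 'I_m) j : val (iter j (@ordS m) a) = (a + j) %% m.
Proof.
elim: j => [|j IH] /=; first by rewrite addn0 modn_small.
by rewrite IH -addn1 modnDml addn1 addnS.
Qed.

Lemma in_subpathE (a : 'I_m) (k : 'I_m.+1) x : a + k <= m ->
  in_subpath a k x = (a <= x) && (x < a + k).
Proof.
move=> hak; apply/existsP/andP => [[j /andP[jk /eqP ->]]|[h1 h2]].
  rewrite iter_ordS_val modn_small; lia.
have hj : x - a < m.+1 by have := ltn_ord x; lia.
exists (Ordinal hj); apply/andP; split; first by rewrite /=; lia.
rewrite -val_eqE iter_ordS_val /= subnKC // modn_small //.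
Qed.

Lemma homE psi : is_hom EC ED psi -> forall a b, EC a b -> ED (psi a) (psi b).
Proof. by move=> /forallP hp a b; move/forallP: (hp a) => /(_ b) /implyP. Qed.

Lemma arc_gen phi psi b Hp Hq Hb c1 c2 :
  repr phi Hp -> validH Hp -> repr psi Hq -> validH Hq -> repr b Hb -> validH Hb ->
  is_hom EC ED b -> ED (lvl c1) (lvl c2) ->
  (forall v : 'I_m, Hp v = Hq v \/ (Hp v = Hb v /\ Hq v = Hb v) \/ (Hp v = c1 /\ Hq v = c2)) ->
  (forall v : 'I_m, Hp v = Hq v.+1 \/ (Hp v = Hb v /\ Hq v.+1 = Hb v.+1) \/
                    (Hp v = c1 /\ Hq v.+1 = c2)) ->
  (forall v : 'I_m, Hp v.+1 = Hq v \/ (Hp v.+1 = Hb v.+1 /\ Hq v = Hb v) \/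
                    (Hp v.+1 = c1 /\ Hq v = c2)) ->
  hom_arc EC ED phi psi.
Proof.
move=> hrp hvp hrq hvq hrb hvb hb hc C1 C2 C3.
apply/forallP => x; apply/forallP => y; apply/implyP => exy.
case: (eqVneq x y) => [<-|nxy].
  rewrite hrp hrq; case: (C1 x) => [->|[[->->]|[->->]]]; try exact: EDloop; try exact: hc.
case/orP: (ECadj nxy exy) => /eqP e; subst.
  rewrite hrp (phiS hrq hvq); case: (C2 x) => [->|[[->->]|[->->]]]; try exact: EDloop; try exact: hc.
  by rewrite -(phiS hrb hvb) -hrb; apply: homE.
rewrite hrq (phiS hrp hvp); case: (C3 y) => [->|[[->->]|[->->]]]; try exact: EDloop; try exact: hc.
by rewrite -(phiS hrb hvb) -hrb; apply: homE.
Qed.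

Lemma mon1_of phi : phi \in Mon1 EC ED i -> mon1_hom EC ED phi.
Proof. by rewrite inE => /andP[]. Qed.

Lemma move_up g t : g \in Mon1 EC ED i -> t \in Mon1 EC ED i ->
  (exists x : 'I_m, hcount g x < hcount t x) ->
  exists g', [/\ up_in EC ED (Mon1 EC ED i) g g' && induced_und EC ED (Mon1 EC ED i) g g',
    forall x : 'I_m, hcount g x <= hcount g' x,
    exists x : 'I_m, hcount g x < hcount g' x &
    (forall x : 'I_m, hcount g x <= hcount t x) -> forall x : 'I_m, hcount g' x <= hcount t x].
Proof.
move=> hg ht [x0 hx0].
case: (Mon1_repr hg) => hrg hvg; case: (Mon1_repr ht) => hrt hvt.
have [g0 gm gs] := hvg; have [t0 tm ts] := hvt.
have exP : exists x, (x < m) && (hcount g x < hcount t x) by exists x0; rewrite ltn_ord hx0.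
case: (ex_minnP exP) => u /andP[um hu] umin.
case: u um hu umin => [|p] um hu umin; first by rewrite g0 t0 in hu.
have hp : hcount t p <= hcount g p.
  rewrite leqNgt; apply/negP => h.
  have := umin p; rewrite h andbT; have -> : p < m by lia.
  by move=> /(_ isT); lia.
have gsp := gs p (ltnW um); have tsp := ts p (ltnW um).
have cn : hcount t p.+1 <= n by apply: (validH_le_n hvt); lia.
set c := hcount g p.
have gp1 : hcount g p.+1 = c by lia.
have tp : hcount t p = c by lia.
have tp1 : hcount t p.+1 = c.+1 by lia.
have exP2 : exists x, (x < m) && (p.+1 <= x) && (hcount g x == c).
  by exists p.+1; rewrite um leqnn gp1 eqxx.
have bnd : forall x, (x < m) && (p.+1 <= x) && (hcount g x == c) -> x <= m.
  by move=> x /andP[/andP[h _] _]; lia.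
case: (ex_maxnP exP2 bnd) => w /andP[/andP[wm uw] /eqP hw] wmax.
have hw1 : hcount g w.+1 = c.+1.
  have := gs w wm; case: (ltnP w.+1 m) => h.
    case: (eqVneq (hcount g w.+1) c) => e; last lia.
    have := wmax w.+1; rewrite h e eqxx /= andbT.
    have -> : p.+1 <= w.+1 by lia.
    by move=> /(_ isT); lia.
  have e : w.+1 = m by lia.
  by rewrite e gm; lia.
have hrange : forall y, p.+1 <= y <= w -> hcount g y = c.
  move=> y hy.
  have h1 : hcount g p.+1 <= hcount g y by apply: (validH_mono hvg); lia.
  have h2 : hcount g y <= hcount g w by apply: (validH_mono hvg); lia.
  lia.
have htrange : forall y, p.+1 <= y <= m -> c.+1 <= hcount t y.
  move=> y hy.
  have h1 : hcount t p.+1 <= hcount t y by apply: (validH_mono hvt); lia.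
  lia.
pose H := fun x => hcount g x + ((p.+1 <= x) && (x <= w)).
have hcase : forall v, v < m ->
   (H v = hcount g v /\ H v.+1 = hcount g v.+1) \/
   (v = p /\ hcount g v = c /\ hcount g v.+1 = c /\ H v = c /\ H v.+1 = c.+1 /\
      hcount t v = c /\ hcount t v.+1 = c.+1) \/
   (p.+1 <= v < w /\ hcount g v = c /\ hcount g v.+1 = c /\ H v = c.+1 /\ H v.+1 = c.+1) \/
   (v = w /\ hcount g v = c /\ hcount g v.+1 = c.+1 /\ H v = c.+1 /\ H v.+1 = c.+1).
  move=> v hv; rewrite /H.
  case: (ltnP v p) => h1; first by left; lia.
  case: (eqVneq v p) => [->|h2]; first by right; left; rewrite gp1 tp tp1; lia.
  case: (ltnP v w) => h3.
    right; right; left; rewrite (hrange v) ?(hrange v.+1); lia.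
  case: (eqVneq v w) => [->|h4]; first by right; right; right; rewrite hw hw1; lia.
  by left; lia.
have hvH : validH H.
  split; first by rewrite /H g0; lia.
    by rewrite /H gm; lia.
  by move=> x hx; have := gs x hx; case: (hcase x hx); lia.
have [|hg'in hg'cnt] := Mon1_of_H hvH.
  move=> v; case: (hcase v (ltn_ord v)) => [[e1 e2]|[[e0 [e1 [e2 [e3 [e4 [e5 e6]]]]]]|[h|h]]].
  - by right; exists g; rewrite -?e1 -?e2.
  - by right; exists t; rewrite e5 e6 e3 e4.
  - by left; lia.
  - by left; lia.
set g' := [ffun x : 'I_m => lvl (H x)].
have hrg' : repr g' H by move=> x; rewrite ffunE.
exists g'; split.
- apply/andP; split.
  + rewrite /up_in hg hg'in /= /one_step_up (mon1_of hg) (mon1_of hg'in) /=.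
    have hk : w - p < m.+1 by lia.
    apply/existsP; exists (Ordinal um); apply/existsP; exists (Ordinal hk).
    apply/and3P; split.
    * rewrite /=; lia.
    * apply/forallP => j; apply/implyP => /= hj.
      rewrite (statH hrg hvg).
      have hv : val (iter j (@ordS m) (Ordinal um)) = p.+1 + j.
        by rewrite iter_ordS_val modn_small /=; lia.
      rewrite hv.
      have e1 := hrange (p.+1 + j) ltac:(lia).
      have e2 := hrange (p.+1 + j).+1 ltac:(lia).
      by rewrite e1 e2.
    * apply/forallP => x; rewrite ffunE in_subpathE /=; last by lia.
      have -> : p.+1 + (w - p) = w.+1 by lia.
      rewrite ltnS (hrg x) /H; case: ifP => _ /=; first by rewrite addn1 lvlS.
      by rewrite addn0.
  + rewrite /induced_und hg hg'in /=.
    have := EDedge (lvl c); rewrite lvlS => /orP[e|e]; apply/orP; [left|right].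
    * apply: (arc_gen hrg hvg hrg' hvH hrg hvg (Mon1_hom hg) e);
        move=> v; case: (hcase v (ltn_ord v)); lia.
    * apply: (arc_gen hrg' hvH hrg hvg hrg hvg (Mon1_hom hg) e);
        move=> v; case: (hcase v (ltn_ord v)); lia.
- by move=> x; rewrite hg'cnt ?(ltnW (ltn_ord x)) // /H; lia.
- by exists (Ordinal um); rewrite hg'cnt /H /=; lia.
- move=> hle x; rewrite hg'cnt ?(ltnW (ltn_ord x)) // /H.
  case: (boolP ((p.+1 <= x) && (x <= w))) => h.
    have := hrange x h; have := htrange x ltac:(have := ltn_ord x; lia); lia.
  by have := hle x; lia.
Qed.

Lemma sum_lt (F G : 'I_m -> nat) : (forall x, F x <= G x) -> (exists x, F x < G x) ->
  \sum_x F x < \sum_x G x.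
Proof.
move=> h [x hx]; rewrite (bigD1 x) //= [X in _ < X](bigD1 x) //=.
by rewrite -addSn; apply: leq_add => //; apply: leq_sum => y _; exact: h.
Qed.

Definition Rel := fun a b => up_in EC ED (Mon1 EC ED i) a b && induced_und EC ED (Mon1 EC ED i) a b.

Lemma reach g t : g \in Mon1 EC ED i -> t \in Mon1 EC ED i ->
  (forall x : 'I_m, hcount g x <= hcount t x) -> connect Rel g t.
Proof.
move=> hg ht hle.
have [k hk] : exists k, \sum_(x : 'I_m) (hcount t x - hcount g x) <= k by eexists.
elim: k g hg hle hk => [|k IH] g hg hle hk.
  have -> : g = t; last exact: connect0.
  case: (Mon1_repr hg) => hrg _; case: (Mon1_repr ht) => hrt _.
  apply: (repr_eq hrg hrt) => x; apply/eqP; rewrite eqn_leq hle /=.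
  move: hk; rewrite leqn0 sum_nat_eq0 => /forallP /(_ x) /implyP /(_ isT).
  by rewrite subn_eq0.
case: (boolP [exists x : 'I_m, hcount g x < hcount t x]) => [/existsP ex|nex].
  have [g' [e hmono hstr hbnd]] := move_up hg ht ex.
  have hg'in : g' \in Mon1 EC ED i by move: e => /andP[/and3P[]].
  apply: (@connect_trans _ Rel g'); first exact: connect1.
  apply: IH => //; first exact: hbnd.
  rewrite -ltnS; apply: leq_trans hk; apply: sum_lt.
    by move=> x; have := hmono x; have := hbnd hle x; lia.
  case: hstr => x hx; exists x; have := hbnd hle x; lia.
have -> : g = t; last exact: connect0.
case: (Mon1_repr hg) => hrg _; case: (Mon1_repr ht) => hrt _.
apply: (repr_eq hrg hrt) => x; apply/eqP; rewrite eqn_leq hle /= leqNgt.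
by apply/negP => h; move/negP: nex; apply; apply/existsP; exists x.
Qed.

Lemma exists_max phi0 : phi0 \in Mon1 EC ED i -> exists2 Mx, Mx \in Mon1 EC ED i &
  forall phi, phi \in Mon1 EC ED i -> forall x : 'I_m, hcount phi x <= hcount Mx x.
Proof.
move=> h0.
case: (@arg_maxnP _ phi0 (fun phi => phi \in Mon1 EC ED i)
          (fun phi => \sum_(x : 'I_m) hcount phi x) h0) => Mx hMx hmax.
exists Mx => // phi hphi x; rewrite leqNgt; apply/negP => hlt.
have [psi hpsi hpsiE] := Mon1_max hphi hMx.
have := hmax psi hpsi; rewrite /= leqNgt => /negP; apply.
apply: sum_lt => [y|]; first by rewrite hpsiE ?(ltnW (ltn_ord y)) // leq_maxr.
by exists x; rewrite hpsiE ?(ltnW (ltn_ord x)) //; lia.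
Qed.

Lemma exists_min phi0 : phi0 \in Mon1 EC ED i -> exists2 Mn, Mn \in Mon1 EC ED i &
  forall phi, phi \in Mon1 EC ED i -> forall x : 'I_m, hcount Mn x <= hcount phi x.
Proof.
move=> h0.
case: (@arg_minnP _ phi0 (fun phi => phi \in Mon1 EC ED i)
          (fun phi => \sum_(x : 'I_m) hcount phi x) h0) => Mn hMn hmin.
exists Mn => // phi hphi x; rewrite leqNgt; apply/negP => hlt.
have [psi hpsi hpsiE] := Mon1_min hphi hMn.
have := hmin psi hpsi; rewrite leqNgt => /negP; apply.
apply: sum_lt => [y|]; first by rewrite hpsiE ?(ltnW (ltn_ord y)) // geq_minr.
by exists x; rewrite hpsiE ?(ltnW (ltn_ord x)) //; lia.
Qed.

Lemma main :
  (forall phi psi, phi \in Mon1 EC ED i -> psi \in Mon1 EC ED i ->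
     connect (induced_und EC ED (Mon1 EC ED i)) phi psi) /\
  ((exists phi, phi \in Mon1 EC ED i) ->
   exists PhiMin PhiMax,
     [/\ PhiMin \in Mon1 EC ED i, PhiMax \in Mon1 EC ED i &
      forall phi, phi \in Mon1 EC ED i ->
        connect (up_in EC ED (Mon1 EC ED i)) PhiMin phi /\
        connect (up_in EC ED (Mon1 EC ED i)) phi PhiMax]).
Proof.
have sub1 : forall a b, connect Rel a b -> connect (induced_und EC ED (Mon1 EC ED i)) a b.
  by apply: connect_sub => a b /andP[_ h]; exact: connect1.
have sub2 : forall a b, connect Rel a b -> connect (up_in EC ED (Mon1 EC ED i)) a b.
  by apply: connect_sub => a b /andP[h _]; exact: connect1.
split.
  move=> phi psi hphi hpsi; have [Mx hMx hmax] := exists_max hphi.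
  have c1 := reach hphi hMx (hmax phi hphi).
  have c2 := reach hpsi hMx (hmax psi hpsi).
  have sym : connect_sym (induced_und EC ED (Mon1 EC ED i)).
    by apply: sym_connect_sym => a b; rewrite /induced_und andbCA orbC.
  apply: connect_trans (sub1 _ _ c1) _; rewrite sym; exact: sub1.
move=> [phi0 h0]; have [Mx hMx hmax] := exists_max h0; have [Mn hMn hmin] := exists_min h0.
exists Mn, Mx; split => // phi hphi; split; apply: sub2; apply: reach => //.
  exact: hmin.
exact: hmax.
Qed.
End S.

Unset Implicit Arguments.

Theorem fact3p5 (m n : nat) (EC : rel 'I_m) (ED : rel 'I_n) (i : 'I_n) :
  refl_cycle EC -> refl_cycle ED -> noncontractible ED ->
  (forall phi psi, phi \in Mon1 EC ED i -> psi \in Mon1 EC ED i ->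
     connect (induced_und EC ED (Mon1 EC ED i)) phi psi) /\
  ((exists phi, phi \in Mon1 EC ED i) ->
   exists PhiMin PhiMax,
     [/\ PhiMin \in Mon1 EC ED i, PhiMax \in Mon1 EC ED i &
      forall phi, phi \in Mon1 EC ED i ->
        connect (up_in EC ED (Mon1 EC ED i)) PhiMin phi /\
        connect (up_in EC ED (Mon1 EC ED i)) phi PhiMax]).
Proof.
move=> [m3 _ ECadj _] [n3 EDloop _ EDedge] _.
exact: main.
Qed.
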